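(* Let $n\ge 2k\ge 6$. Let $\mathbb{S}$ be a $q$-covering design $\mathcal{C}_2(n-k+2,k,3)$ (a set of $k$-dimensional subspaces of $\mathbb{F}_2^{n-k+2}$ covering every $3$-dimensional subspace). Suppose $U_0\subseteq\mathbb{F}_2^{n-k+2}$ is an $(n-k)$-dimensional subspace and $U_1,U_2,U_3\subseteq\mathbb{F}_2^{n-k+2}$ are $(n-k+1)$-dimensional subspaces with $U_i\cap U_j=U_0$ for $1\le i<j\le 3$. Let $c_i=|\{X\in\mathbb{S}: X\subseteq U_i\}|$ for $i=0,1,2,3$, and suppose $c_1\le c_2\le c_3$. Then $$\mathcal{C}_2(n,k,3)\le 2^{3(n-k)}+\binom{k}{2}_2\,(|\mathbb{S}|-c_1-c_2-c_3+2c_0)+(2^k-1)(c_1-c_0)+\mathcal{C}_2(n-k,k,3).$$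
   Context: $\binom{k}{2}_2=\frac{(2^k-1)(2^{k-1}-1)}{3}$ is the Gaussian coefficient (number of $2$-dimensional subspaces of $\mathbb{F}_2^k$). A $q$-covering design $\mathcal{C}_q(n,k,r)$ is a collection of $k$-dimensional subspaces of $\mathbb{F}_q^n$ such that every $r$-dimensional subspace is contained in at least one member; $\mathcal{C}_q(n,k,r)$ is the minimum size of such a collection. *)

(* Defs.v *)
From HB Require Import structures.
From mathcomp Require Import all_boot all_order all_algebra all_fingroup.
Set Implicit Arguments. Unset Strict Implicit. Unset Printing Implicit Defensive.
Import GRing.Theory.

(* A subspace of F_2^m is represented canonically by the square matrix
   <<A>>%MS (its row space, in canonical form). *)
Definition subspace (m : nat) (X : 'M['F_2]_m) : bool := (<<X>>%MS == X).

Definition is_covering (m k r : nat) (S : {set 'M['F_2]_m}) : bool :=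
  [forall X in S, subspace X && (\rank X == k)] &&
  [forall Y : 'M['F_2]_m, (subspace Y && (\rank Y == r)) ==>
       [exists X in S, (Y <= X)%MS]].

(* Minimum size of a covering design C_2(m,k,r) (default value #|{set 'M_m}|
   if none exists, which never happens for r <= k <= m). *)
Definition covering_number (m k r : nat) : nat :=
  \big[minn/#|{: {set 'M['F_2]_m}}|]_(S : {set 'M['F_2]_m} | is_covering k r S) #|S|.

Definition gauss2 (k : nat) : nat := ((2 ^ k - 1) * (2 ^ k.-1 - 1)) %/ 3.

(* Main.v *)
From HB Require Import structures.
From mathcomp Require Import all_boot all_order all_algebra all_fingroup all_solvable all_field.
From mathcomp Require Import ring zify.
Require Import Defs.
Set Implicit Arguments. Unset Strict Implicit. Unset Printing Implicit Defensive.
Import GRing.Theory.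
Local Open Scope ring_scope.

Lemma F2_cases (a : 'F_2) : a = 0 \/ a = 1.
Proof.
case: a => [[|[|i]] hi].
- by left; apply/val_inj.
- by right; apply/val_inj.
- by [].
Qed.

Lemma F2_addxx m n (A : 'M['F_2]_(m, n)) : A + A = 0.
Proof.
have h2 : (2%:R : 'F_2) = 0 by apply/val_inj.
by rewrite -mulr2n -scaler_nat h2 scale0r.
Qed.

Lemma add_scaleF2 m n (f : 'rV['F_2]_m -> 'rV['F_2]_n) :
  {morph f : x y / x + y} -> forall a x, f (a *: x) = a *: f x.
Proof.
move=> hf a x; have f0 : f 0 = 0.
  by apply: (@addrI _ (f 0)); rewrite -hf !addr0.
by case: (F2_cases a) => ->; rewrite ?scale0r ?scale1r.
Qed.

Definition mxof_fun m n (f : 'rV['F_2]_m -> 'rV['F_2]_n) : 'M['F_2]_(m, n) :=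
  \matrix_(i < m) f (delta_mx 0 i).

Lemma mxof_funE m n (f : 'rV['F_2]_m -> 'rV['F_2]_n) :
  {morph f : x y / x + y} -> forall u, u *m mxof_fun f = f u.
Proof.
move=> hf u; have f0 : f 0 = 0.
  by apply: (@addrI _ (f 0)); rewrite -hf !addr0.
rewrite mulmx_sum_row {2}(row_sum_delta u) (big_morph f hf f0).
by apply: eq_bigr => i _; rewrite rowK add_scaleF2.
Qed.


Lemma field_model (m : nat) : (0 < m)%N ->
  exists F : finFieldType, exists iota : F -> 'rV['F_2]_m,
    [/\ 2%N \in [pchar F], #|F| = (2 ^ m)%N, {morph iota : x y / x + y} & bijective iota].
Proof.
move=> hm; case: (@pPrimePowerField 2 m isT hm) => Fm chF cardF.
have [f lin_f bij_f] := pprimeChar_vectAxiom chF.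
have e : logn 2 #|pPrimeCharType chF| = m.
  by rewrite cardF pfactorK.
move: f lin_f bij_f; rewrite e => f lin_f bij_f.
exists Fm, f; split => //.
by move=> x y; have := lin_f 1 x y; rewrite !scale1r.
Qed.

Lemma char2_sqr (F : finFieldType) (x y : F) : 2%N \in [pchar F] ->
  (x + y) ^+ 2 = x ^+ 2 + y ^+ 2.
Proof.
move=> chF; have h2 : (2%:R : F) = 0 := pcharf0 chF.
have -> : (x + y) ^+ 2 = x ^+ 2 + y ^+ 2 + 2%:R * x * y by ring.
by rewrite h2 !mul0r addr0.
Qed.

Definition fa (F : finFieldType) (a : F * F * F) (x : F) :=
  a.1.1 * x + a.1.2 * x ^+ 2 + a.2 * x ^+ 4.

Lemma faE (F : finFieldType) (a1 a2 a3 x : F) :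
  fa (a1, a2, a3) x = a1 * x + a2 * x ^+ 2 + a3 * x ^+ 4.
Proof. by []. Qed.

Lemma fa_add (F : finFieldType) (a : F * F * F) : 2%N \in [pchar F] ->
  {morph fa a : x y / x + y}.
Proof.
move=> chF x y; rewrite /fa.
have e4 : forall z : F, z ^+ 4 = (z ^+ 2) ^+ 2 by move=> z; rewrite -exprM.
rewrite !e4 !char2_sqr //; ring.
Qed.

Lemma mrd (m : nat) : exists H : {set 'M['F_2]_m}, (#|H| <= 2 ^ (3 * m))%N /\
  forall X C : 'M['F_2]_(3, m), row_free X -> exists2 A, A \in H & X *m A = C.
Proof.
case: m => [|m].
  exists set0; split; first by rewrite cards0.
  by move=> X C hX; have := rank_leq_col X; rewrite (eqP hX).
have [F [iota [chF cardF hadd [iinv h1 h2]]]] := field_model (ltn0Sn m).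
have iadd : {morph iinv : x y / x + y}.
  by move=> x y; apply: (can_inj h1); rewrite hadd !h2.
pose h (a : F * F * F) (v : 'rV['F_2]_m.+1) := iota (fa a (iinv v)).
have hadd' : forall a, {morph h a : x y / x + y}.
  by move=> a x y; rewrite /h iadd fa_add // hadd.
exists [set mxof_fun (h a) | a : F * F * F]; split.
  apply: leq_trans (leq_imset_card _ _) _.
  by rewrite !card_prod cardF -!expnD mulSn mul2n -addnn addnA.
move=> X C fX.
pose x (j : 'I_3) := iinv (row j X).
pose Phi (a : F * F * F) := (fa a (x 0), fa a (x 1), fa a (x 2)).
have Phi_inj : injective Phi.
  move=> [[a1 a2] a3] [[b1 b2] b3] [e0 e1 e2].
  pose g v := h (a1, a2, a3) v - h (b1, b2, b3) v.
  have gadd : {morph g : u v / u + v}.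
    by move=> u v; rewrite /g !hadd' opprD addrACA.
  have gX : X *m mxof_fun g = 0.
    apply/row_matrixP => j; rewrite row_mul mxof_funE // row0 /g /h.
    have -> : fa (a1, a2, a3) (iinv (row j X)) = fa (b1, b2, b3) (iinv (row j X)).
      case: j => [[|[|[|//]]] hj].
      - by have -> : Ordinal hj = 0 by apply/val_inj.
      - by have -> : Ordinal hj = 1 by apply/val_inj.
      - by have -> : Ordinal hj = 2%:R by apply/val_inj.
    by rewrite subrr.
  pose p : {poly F} := (a1 - b1) *: 'X + (a2 - b2) *: 'X^2 + (a3 - b3) *: 'X^4.
  have hroot : forall l : 'rV['F_2]_3, root p (iinv (l *m X)).
    move=> l; have : g (l *m X) = 0 by rewrite -mxof_funE // -mulmxA gX mulmx0.
    rewrite /g /h => /eqP; rewrite subr_eq0 => /eqP /(can_inj h1).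
    move=> e; apply/eqP.
    have -> : p.[iinv (l *m X)] = fa (a1, a2, a3) (iinv (l *m X)) - fa (b1, b2, b3) (iinv (l *m X)).
      by rewrite /p !faE !hornerD !hornerZ !hornerXn hornerX; ring.
    by rewrite e subrr.
  have p0 : p = 0.
    apply/eqP; apply: contraT => pn0.
    have := max_poly_roots pn0 (rs := [seq iinv (l *m X) | l : 'rV['F_2]_3]).
    rewrite map_inj_uniq ?enum_uniq; last first.
      by move=> l1 l2 /(can_inj h2) /(row_free_inj fX).
    have -> : all (root p) [seq iinv (l *m X) | l : 'rV['F_2]_3].
      by apply/allP => z /mapP [l _ ->].
    move=> /(_ isT isT); rewrite size_map -cardE card_mx card_Fp //=.
    have : (size p <= 5)%N.
      rewrite /p; apply: leq_trans (size_polyD _ _) _; rewrite geq_max.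
      apply/andP; split; last by apply: leq_trans (size_scale_leq _ _) _; rewrite size_polyXn.
      apply: leq_trans (size_polyD _ _) _; rewrite geq_max.
      apply/andP; split; first by apply: leq_trans (size_scale_leq _ _) _; rewrite size_polyX.
      by apply: leq_trans (size_scale_leq _ _) _; rewrite size_polyXn.
    by move=> h5 h8; have := leq_trans h8 h5.
  have c1 := congr1 (fun q : {poly F} => q`_1) p0.
  have c2 := congr1 (fun q : {poly F} => q`_2) p0.
  have c4 := congr1 (fun q : {poly F} => q`_4) p0.
  move: c1 c2 c4; rewrite /p /= !coefD !coefZ !coefXn !coefX !coef0 /=.
  rewrite !mulr0 !mulr1 !addr0 !add0r => /eqP; rewrite subr_eq0 => /eqP ->.
  by move=> /eqP; rewrite subr_eq0 => /eqP -> /eqP; rewrite subr_eq0 => /eqP ->.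
have [Psi hPsi1 hPsi2] := injF_bij Phi_inj.
pose a := Psi (iinv (row 0 C), iinv (row 1 C), iinv (row 2 C)).
have ha := hPsi2 (iinv (row 0 C), iinv (row 1 C), iinv (row 2 C)).
exists (mxof_fun (h a)); first exact: imset_f.
apply/row_matrixP => j; rewrite row_mul mxof_funE // /h.
move: ha; rewrite -/a /Phi /x => -[e0 e1 e2].
case: j => [[|[|[|//]]] hj].
- have -> : Ordinal hj = 0 by apply/val_inj.
  by rewrite e0 h2.
- have -> : Ordinal hj = 1 by apply/val_inj.
  by rewrite e1 h2.
- have -> : Ordinal hj = 2%:R by apply/val_inj.
  by rewrite e2 h2.
Qed.

Lemma sub_col2 (F : fieldType) n (u v s : 'rV[F]_n) :
  (u <= col_mx v s)%MS -> exists a b : F, u = a *: v + b *: s.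
Proof.
case/submxP => D ->; rewrite -[D]hsubmxK mul_row_col.
rewrite [lsubmx D]mx11_scalar [rsubmx D]mx11_scalar !mul_scalar_mx.
by eexists; eexists.
Qed.

Lemma sub_row1 (F : fieldType) n (u v : 'rV[F]_n) :
  (u <= v)%MS -> exists a : F, u = a *: v.
Proof. by case/submxP => D ->; rewrite [D]mx11_scalar mul_scalar_mx; eexists. Qed.

Lemma sq4 (F : finFieldType) (al c e : F) : 2%N \in [pchar F] ->
  (c = 0 \/ c = 1) -> (e = 0 \/ e = 1) -> al ^+ 2 = c + e * al -> al ^+ 4 = al.
Proof.
move=> chF hc he h; have h2 : (2%:R : F) = 0 := pcharf0 chF.
have e4 : al ^+ 4 = (al ^+ 2) ^+ 2 by rewrite -exprM.
have h11 : (1 + 1 : F) = 0 by rewrite -mulr2n h2.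
move: h; case: hc => -> ; case: he => -> h; rewrite ?mul0r ?mul1r ?addr0 ?add0r in h.
- have : al ^+ 2 == 0 by rewrite h.
  by rewrite expf_eq0 /= => /eqP ->; rewrite expr0n.
- by rewrite e4 h.
- have : (al + 1) ^+ 2 = 0 by rewrite char2_sqr // h expr1n.
  move=> /eqP; rewrite expf_eq0 /= => /eqP h1.
  have -> : al = 1 by rewrite -[al]addr0 -h11 addrA h1 add0r.
  by rewrite expr1n.
- by rewrite e4 h char2_sqr // h expr1n addrA h11 add0r.
Qed.

Lemma F2_scale_iinv (F : finFieldType) k (iinv : 'rV['F_2]_k -> F) :
  {morph iinv : x y / x + y} -> forall (a : 'F_2) u,
  exists a' : F, (a' = 0 \/ a' = 1) /\ iinv (a *: u) = a' * iinv u.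
Proof.
move=> hadd a u; have i0 : iinv 0 = 0.
  by apply: (@addrI _ (iinv 0)); rewrite -hadd !addr0.
case: (F2_cases a) => ->.
- by exists 0; split; [left | rewrite scale0r mul0r i0].
- by exists 1; split; [right | rewrite scale1r mul1r].
Qed.

Lemma plane_map (k : nat) : (3 <= k)%N -> exists sig : 'rV['F_2]_k -> 'rV['F_2]_k,
  (forall v, v != 0 -> \rank (col_mx v (sig v)) = 2%N) /\
  (forall v w, v != 0 -> w != 0 -> (col_mx w (sig w) <= col_mx v (sig v))%MS -> w = v).
Proof.
move=> hk; have hk0 : (0 < k)%N by apply: leq_trans hk.
have [F [iota [chF cardF hadd [iinv h1 h2]]]] := field_model hk0.
have iadd : {morph iinv : x y / x + y}.
  by move=> x y; apply: (can_inj h1); rewrite hadd !h2.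
have i0 : iinv 0 = 0 by apply: (@addrI _ (iinv 0)); rewrite -iadd !addr0.
have o0 : iota 0 = 0 by apply: (@addrI _ (iota 0)); rewrite -hadd !addr0.
have inz : forall v, v != 0 -> iinv v != 0.
  by move=> v; apply: contra => /eqP e; rewrite -[v]h2 e o0.
have h2F : (2%:R : F) = 0 := pcharf0 chF.
have h11 : (1 + 1 : F) = 0 by rewrite -mulr2n h2F.
have [al hal] : exists al : F, al ^+ 4 != al.
  apply/existsP; apply: contraT; rewrite negb_exists => /forallP hall.
  pose q : {poly F} := 'X^4 - 'X.
  have qn0 : q != 0.
    apply/eqP => /(congr1 (fun p : {poly F} => p`_4)).
    by rewrite /q coefB coefXn coefX /= coef0 subr0 => /eqP; rewrite oner_eq0.
  have := max_poly_roots qn0 (rs := enum F).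
  rewrite enum_uniq; have -> : all (root q) (enum F).
    by apply/allP => z _; rewrite /root /q !hornerE subr_eq0; have := hall z; rewrite negbK.
  move=> /(_ isT isT); rewrite -cardE cardF.
  have -> : size q = 5%N by rewrite /q size_polyDl ?size_polyXn // size_polyN size_polyX.
  have : (2 ^ 3 <= 2 ^ k)%N by rewrite leq_exp2l.
  by move=> /leq_trans h /h.
pose sig v := iota (al * iinv v).
have al4 : forall c e : F, (c = 0 \/ c = 1) -> (e = 0 \/ e = 1) -> al ^+ 2 != c + e * al.
  by move=> c e hc he; apply: contra hal => /eqP h; apply/eqP; apply: sq4 hc he h.
have al0 : al != 0 by apply: contra hal => /eqP ->; rewrite expr0n.
have al1 : al != 1 by apply: contra hal => /eqP ->; rewrite expr1n.
exists sig; split.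
  move=> v vn0; apply/eqP; rewrite eqn_leq rank_leq_row /=.
  have rv : \rank v = 1%N by rewrite rank_rV vn0.
  apply: (@leq_trans (\rank v).+1); first by rewrite rv.
  apply: rank_ltmx; rewrite ltmxE; apply/andP; split.
    by apply/submxP; exists (row_mx 1%:M 0); rewrite mul_row_col mul1mx mul0mx addr0.
  rewrite col_mx_sub submx_refl /=; apply/negP => /sub_row1 [a ha].
  have : iinv (sig v) = iinv (a *: v) by rewrite ha.
  have [a' [ha' ->]] := F2_scale_iinv iadd a v.
  rewrite /sig h1 => /eqP; rewrite -subr_eq0 -mulrBl mulf_eq0 (negPf (inz _ vn0)) orbF subr_eq0.
  by case: ha' => ->; [apply/negP | apply/negP].
move=> v w vn0 wn0; rewrite col_mx_sub => /andP [hw hsw].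
have [a [b eab]] := sub_col2 hw.
have [c [d ecd]] := sub_col2 hsw.
pose x := iinv v; pose y := iinv w.
have [a' [ha' ea]] := F2_scale_iinv iadd a v.
have [b' [hb' eb]] := F2_scale_iinv iadd b (sig v).
have [c' [hc' ec]] := F2_scale_iinv iadd c v.
have [d' [hd' ed]] := F2_scale_iinv iadd d (sig v).
have ey : y = a' * x + b' * (al * x) by rewrite /y eab iadd ea eb /sig h1.
have eay : al * y = c' * x + d' * (al * x).
  by have := congr1 iinv ecd; rewrite iadd ec ed /sig !h1.
have xn0 : x != 0 by apply: inz.
case: hb' => hb'.
  rewrite hb' mul0r addr0 in ey.
  case: ha' => ha'.
    by move: (inz _ wn0); rewrite -/y ey ha' mul0r eqxx.
  by rewrite -[w]h2 -/y ey ha' mul1r /x h2.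
exfalso; rewrite hb' mul1r in ey.
have : (al ^+ 2 - (c' + (d' + a') * al)) * x = 0.
  have -> : (al ^+ 2 - (c' + (d' + a') * al)) * x = al * y - (c' * x + d' * (al * x)) - (a' + a') * al * x.
    by rewrite ey; ring.
  have -> : a' + a' = 0 by case: ha' => ->; rewrite ?addr0.
  by rewrite eay subrr !mul0r subr0.
move=> /eqP; rewrite mulf_eq0 (negPf xn0) orbF subr_eq0 => /eqP h.
have he : d' + a' = 0 \/ d' + a' = 1.
  by case: hd' => ->; case: ha' => ->; rewrite ?addr0 ?add0r ?h11; auto.
by move: (al4 _ _ hc' he); rewrite h eqxx.
Qed.

Lemma basis_of (F : fieldType) m n (P : 'M[F]_(m, n)) r : \rank P = r ->
  exists W : 'M[F]_(r, n), (W :=: P)%MS /\ row_free W.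
Proof. by move=> <-; exists (row_base P); split; [exact: eq_row_base | exact: row_base_free]. Qed.

Definition planes k := [set P : 'M['F_2]_k | subspace P && (\rank P == 2%N)].

Lemma pair_ok k (P : 'M['F_2]_k) (b1 b2 x y : 'rV['F_2]_k) :
  subspace P -> (col_mx b1 b2 :=: P)%MS -> \rank P = 2%N -> (x <= P)%MS -> (y <= P)%MS ->
  (b1 <= col_mx x y)%MS -> (b2 <= col_mx x y)%MS ->
  (\rank (col_mx x y) == 2%N) && (<<col_mx x y>>%MS == P).
Proof.
move=> sP eWP rP xP yP h1 h2.
have Wxy : (col_mx b1 b2 <= col_mx x y)%MS by rewrite col_mx_sub h1 h2.
have r2 : \rank (col_mx x y) = 2%N.
  apply/eqP; rewrite eqn_leq rank_leq_row /=.
  by have := mxrankS Wxy; rewrite eWP rP.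
rewrite r2 eqxx /=.
have sub : (col_mx x y <= P)%MS by rewrite col_mx_sub xP yP.
have /eqmxP e : (col_mx x y == P)%MS.
  by have := mxrank_leqif_eq sub; rewrite r2 rP => /leqif_refl.
by rewrite (eq_genmx e) (eqP sP).
Qed.

Lemma in_col2 k (x y : 'rV['F_2]_k) :
  [/\ (x <= col_mx x y)%MS, (y <= col_mx x y)%MS & ((x + y)%R <= col_mx x y)%MS].
Proof.
split.
- by apply/submxP; exists (row_mx (1%:M : 'M_1) 0); rewrite mul_row_col mul1mx mul0mx addr0.
- by apply/submxP; exists (row_mx 0 (1%:M : 'M_1)); rewrite mul_row_col mul1mx mul0mx add0r.
- by apply/submxP; exists (row_mx (1%:M : 'M_1) 1%:M); rewrite mul_row_col !mul1mx.
Qed.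

Lemma card_pairs k :
  (#|[set vw : 'rV['F_2]_k * 'rV['F_2]_k | \rank (col_mx vw.1 vw.2) == 2%N]|
     <= (2 ^ k - 1) * (2 ^ k - 2))%N.
Proof.
rewrite -sum1_card.
rewrite (eq_bigl (fun vw : 'rV['F_2]_k * 'rV['F_2]_k =>
   predT vw.1 && (\rank (col_mx vw.1 vw.2) == 2%N))); last by move=> vw; rewrite inE.
rewrite -(pair_big_dep predT (fun v w => \rank (col_mx v w) == 2%N) (fun _ _ => 1%N)) /=.
rewrite (bigD1 0) //= big1 ?add0n; last first.
  move=> w; rewrite eqn_leq => /andP [_ h]; move: h.
  have : (col_mx (0 : 'rV['F_2]_k) w <= w)%MS.
    by rewrite col_mx_sub sub0mx submx_refl.
  move=> /mxrankS h1 h2; have := leq_trans h2 h1; rewrite rank_rV; by case: (w != 0).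
have hcard : (#|'rV['F_2]_k| = 2 ^ k)%N by rewrite card_mx card_Fp // mul1n.
apply: (@leq_trans (\sum_(v | v != 0) (2 ^ k - 2)%N)).
  apply: leq_sum => v vn0; rewrite sum1_card.
  apply: (@leq_trans #|~: [set 0; v]|).
    apply: subset_leq_card; apply/subsetP => w; rewrite !inE => hw.
    apply/negP => /orP h; move: hw; apply/negP.
    have : (col_mx v w <= v)%MS.
      by rewrite col_mx_sub submx_refl /=; case: h => /eqP ->; rewrite ?sub0mx ?submx_refl.
    move=> /mxrankS h1; apply/negP => /eqP h2; move: h1; by rewrite h2 rank_rV vn0.
  have := cardsC [set 0; v]; rewrite cards2 eq_sym vn0 hcard => <-.
  by rewrite addKn.
rewrite sum_nat_const; apply: leq_mul => //.
have := cardC1 (0 : 'rV['F_2]_k); rewrite hcard => e.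
by rewrite (eq_card (B := predC1 0)) ?e ?subn1 // => v; rewrite !inE.
Qed.

Lemma sub_pair k (x y z : 'rV['F_2]_k) :
  [\/ z = x, z = y | z = x + y] -> (z <= col_mx x y)%MS.
Proof. by have [h1 h2 h3] := in_col2 x y; case=> ->. Qed.

Lemma card_planes k : (#|planes k| <= gauss2 k)%N.
Proof.
pose pairs := [set vw : 'rV['F_2]_k * 'rV['F_2]_k | \rank (col_mx vw.1 vw.2) == 2%N].
pose pi (vw : 'rV['F_2]_k * 'rV['F_2]_k) := <<col_mx vw.1 vw.2>>%MS.
have h6 : (#|planes k| * 6 <= #|pairs|)%N.
  rewrite -[#|pairs|]sum1_card (partition_big pi (mem (planes k))) /=; last first.
    by move=> vw; rewrite !inE /pi /subspace genmx_id eqxx mxrank_gen.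
  rewrite -sum_nat_const; apply: leq_sum => P; rewrite inE => /andP [sP /eqP rP].
  have [W [eWP fW]] := basis_of rP.
  pose b1 := usubmx (W : 'M_(1 + 1, k)); pose b2 := dsubmx (W : 'M_(1 + 1, k)).
  have eW : W = col_mx b1 b2 by rewrite vsubmxK.
  have hsub : forall z : 'rV['F_2]_k, (z <= W)%MS -> (z <= P)%MS by move=> z; rewrite eWP.
  have [s1 s2 _] := in_col2 b1 b2.
  have b1P : (b1 <= P)%MS by apply: hsub; rewrite eW.
  have b2P : (b2 <= P)%MS by apply: hsub; rewrite eW.
  have b3P : ((b1 + b2)%R <= P)%MS by rewrite addmx_sub.
  have rW : \rank (col_mx b1 b2) = 2%N by rewrite -eW; apply/eqP.
  have small : forall m (z : 'M['F_2]_(m, k)), (col_mx b1 b2 <= z)%MS -> forall r : 'rV['F_2]_k, (z <= r)%MS -> False.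
    by move=> m z h r /(submx_trans h) /mxrankS; rewrite rW rank_rV; case: (r != 0).
  have n10 : b1 != 0.
    apply/negP => /eqP e; apply: (small _ _ (submx_refl _) b2).
    by rewrite col_mx_sub e sub0mx submx_refl.
  have n20 : b2 != 0.
    apply/negP => /eqP e; apply: (small _ _ (submx_refl _) b1).
    by rewrite col_mx_sub e sub0mx submx_refl.
  have n12 : b1 != b2.
    apply/negP => /eqP e; apply: (small _ _ (submx_refl _) b1).
    by rewrite col_mx_sub -e submx_refl.
  have n13 : b1 != b1 + b2.
    by apply: contra n20 => /eqP e; apply/eqP; apply: (@addrI _ b1); rewrite -e addr0.
  have n23 : b2 != b1 + b2.
    by apply: contra n10 => /eqP e; apply/eqP; apply: (@addIr _ b2); rewrite -e add0r.
  have x12 : b1 + (b1 + b2) = b2 by rewrite addrA F2_addxx add0r.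
  have x21 : b1 + b2 + b1 = b2 by rewrite addrC x12.
  have y12 : b2 + (b1 + b2) = b1 by rewrite addrCA F2_addxx addr0.
  have y21 : b1 + b2 + b2 = b1 by rewrite addrC y12.
  pose s := [:: (b1, b2); (b2, b1); (b1, b1 + b2); (b1 + b2, b1); (b2, b1 + b2); (b1 + b2, b2)].
  have us : uniq s.
    rewrite /s /= !inE !xpair_eqE !negb_or.
    rewrite (negPf n12) (negPf n13) (negPf n23) !(eq_sym b2 b1) !(eq_sym (b1 + b2)).
    by rewrite (negPf n12) (negPf n13) (negPf n23) /= ?andbF ?andbT.
  have : (size s <= #|[pred vw | (vw \in pairs) && (pi vw == P)]|)%N.
    rewrite -(card_uniqP us); apply: subset_leq_card; apply/subsetP => z zs.
    have ok : forall x y : 'rV['F_2]_k, (x <= P)%MS -> (y <= P)%MS ->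
        (b1 <= col_mx x y)%MS -> (b2 <= col_mx x y)%MS ->
        (\rank (col_mx x y) == 2%N) && (pi (x, y) == P).
      have eWP' : (col_mx b1 b2 :=: P)%MS by rewrite -eW.
      move=> x y xP yP h1 h2; exact: (pair_ok sP eWP' rP xP yP h1 h2).
    move: zs; rewrite !inE => /orP [/eqP -> | /orP [/eqP -> | /orP [/eqP -> | /orP [/eqP -> | /orP [/eqP -> | /eqP ->]]]]];
      apply: ok => //;
      apply: sub_pair; rewrite ?x12 ?x21 ?y12 ?y21; by [constructor 1 | constructor 2 | constructor 3].
  move=> hs; apply: leq_trans hs _; rewrite -sum1_card; apply: eq_leq.
  by apply: eq_bigl => i; rewrite !inE.
have h := leq_trans h6 (card_pairs k).
rewrite /gauss2 leq_divRL //.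
move: (#|planes k|) h => p; clear.
case: k => [|k] h.
  by move: h; rewrite expn0 subnn !mul0n leqn0 muln_eq0 orbF => /eqP ->.
rewrite expnS /= in h *.
have e : (2 * 2 ^ k - 2 = 2 * (2 ^ k - 1))%N by rewrite mulnBr muln1.
rewrite e mulnCA (_ : p * 6 = 2 * (p * 3))%N in h; last by rewrite mulnCA.
by rewrite leq_pmul2l in h.
Qed.

Lemma sub_colL (F : fieldType) m1 m2 n (A : 'M[F]_(m1, n)) (B : 'M[F]_(m2, n)) :
  (A <= col_mx A B)%MS.
Proof. by rewrite -addsmxE addsmxSl. Qed.

Lemma sub_colR (F : fieldType) m1 m2 n (A : 'M[F]_(m1, n)) (B : 'M[F]_(m2, n)) :
  (B <= col_mx A B)%MS.
Proof. by rewrite -addsmxE addsmxSr. Qed.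

Lemma exists_notin (F : fieldType) m n (A : 'M[F]_(m, n)) : (\rank A < n)%N ->
  exists v : 'rV[F]_n, ~~ (v <= A)%MS.
Proof.
move=> hA; case: (pickP (fun i => ~~ (row i 1%:M <= A)%MS)) => [i hi | h0].
  by exists (row i 1%:M).
have : (1%:M <= A)%MS.
  by apply/row_subP => i; have := h0 i; move/negbFE.
by move=> /mxrankS; rewrite mxrank1 leqNgt hA.
Qed.

Lemma rank_col1 (F : fieldType) m n (A : 'M[F]_(m, n)) (v : 'rV[F]_n) :
  ~~ (v <= A)%MS -> \rank (col_mx A v) = (\rank A).+1.
Proof.
move=> hv; apply/eqP; rewrite eqn_leq; apply/andP; split.
  rewrite -addsmxE; apply: leq_trans (mxrank_adds_leqif A v) _.
  by rewrite -(addn1 (\rank A)) leq_add2l rank_rV; case: (v != 0).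
apply: rank_ltmx; rewrite ltmxE sub_colL /= col_mx_sub negb_and hv orbT //.
Qed.

Lemma extend m (k : nat) (Y : 'M['F_2]_m) : (\rank Y <= k <= m)%N ->
  exists X : 'M['F_2]_m, [&& subspace X, \rank X == k & (Y <= X)%MS].
Proof.
move Hd: (k - \rank Y)%N => d; elim: d Y Hd => [|d IH] Y Hd /andP [h1 h2].
  exists <<Y>>%MS; rewrite /subspace genmx_id eqxx mxrank_gen genmxE submx_refl andbT /=.
  by rewrite eqn_leq h1 -subn_eq0 Hd.
have hlt : (\rank Y < m)%N.
  by apply: leq_trans h2; rewrite -subn_gt0 Hd.
have [v hv] := exists_notin hlt.
have e1 : (k - \rank <<col_mx Y v>>%MS)%N = d.
  by rewrite mxrank_gen rank_col1 // subnS Hd.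
have e2 : (\rank <<col_mx Y v>>%MS <= k <= m)%N.
  rewrite mxrank_gen rank_col1 // h2 andbT.
  by rewrite -subn_gt0 Hd.
have [X /and3P [sX rX YX]] := IH <<col_mx Y v>>%MS e1 e2.
exists X; rewrite sX rX /=; apply: submx_trans YX.
by rewrite genmxE sub_colL.
Qed.

Lemma cov_le m k r (S : {set 'M['F_2]_m}) : is_covering k r S ->
  (covering_number m k r <= #|S|)%N.
Proof.
move=> hS; rewrite /covering_number -minEnat.
by have := @Order.TotalTheory.bigmin_le_cond _ _ _ #|{: {set 'M['F_2]_m}}| S
  (fun S => is_covering k r S) (fun S => #|S|) hS.
Qed.

Lemma cov_exists m k r : (r <= k <= m)%N ->
  exists S : {set 'M['F_2]_m}, is_covering k r S /\ #|S| = covering_number m k r.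
Proof.
move=> /andP [hrk hkm].
pose Sall := [set X : 'M['F_2]_m | subspace X && (\rank X == k)].
have hall : is_covering k r Sall.
  apply/andP; split; first by apply/forallP => X; apply/implyP; rewrite inE.
  apply/forallP => Y; apply/implyP => /andP [sY /eqP rY].
  have hY : (\rank Y <= k <= m)%N by rewrite rY hrk hkm.
  have [X /and3P [sX rX YX]] := extend hY.
  by apply/existsP; exists X; rewrite inE sX rX YX.
have hmax : forall S : {set 'M['F_2]_m}, is_covering k r S ->
    (#|S| <= #|{: {set 'M['F_2]_m}}|)%O.
  move=> S _; rewrite leEnat; apply: leq_trans (max_card (mem S)) _.
  rewrite -(card_imset predT (@set1_inj _)); exact: max_card.
have [S0 hS0 e] := @Order.TotalTheory.eq_bigmin _ _ _ #|{: {set 'M['F_2]_m}}| Sall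
  (fun S => is_covering k r S) (fun S => #|S|) hall hmax.
by exists S0; split => //; rewrite /covering_number -minEnat e.
Qed.

Definition Qof k (sig : 'rV['F_2]_k -> 'rV['F_2]_k) (P : 'M['F_2]_k) : 'M['F_2]_(2, k) :=
  match [pick v | (v != 0) && (<<col_mx v (sig v)>>%MS == P)] with
  | Some v => col_mx v (sig v)
  | None => match [pick Q : 'M['F_2]_(2, k) | (\rank Q == 2%N) && (<<Q>>%MS == P)] with
            | Some Q => Q | None => 0 end
  end.

Lemma Qof_plane k (sig : 'rV['F_2]_k -> 'rV['F_2]_k) P :
  (forall v, v != 0 -> \rank (col_mx v (sig v)) = 2%N) ->
  P \in planes k -> \rank (Qof sig P) = 2%N /\ (P <= Qof sig P)%MS.
Proof.
move=> sig_rk; rewrite inE => /andP [sP /eqP rP]; rewrite /Qof.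
case: pickP => [v /andP [vn0 /eqP e] | _].
  by split; [exact: sig_rk | rewrite -e genmxE].
case: pickP => [Q /andP [/eqP rQ /eqP e] | h0].
  by split => //; rewrite -e genmxE.
exfalso; have [W [eWP fW]] := basis_of rP.
have := h0 W; rewrite (eqP fW) eqxx /=.
by rewrite (eq_genmx eWP) (eqP sP) eqxx.
Qed.

Lemma Qof_col k (sig : 'rV['F_2]_k -> 'rV['F_2]_k) v :
  (forall v w, v != 0 -> w != 0 -> (col_mx w (sig w) <= col_mx v (sig v))%MS -> w = v) ->
  v != 0 -> Qof sig <<col_mx v (sig v)>>%MS = col_mx v (sig v).
Proof.
move=> sig_inj vn0; rewrite /Qof.
case: pickP => [w /andP [wn0 /eqP e] | h0].
  have h : (col_mx w (sig w) <= <<col_mx v (sig v)>>)%MS by rewrite -e genmxE.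
  by rewrite genmxE in h; rewrite (sig_inj v w vn0 wn0 h).
by have := h0 v; rewrite vn0 eqxx.
Qed.

Lemma row0_col (R : nmodType) m1 m2 n1 n2 (a : 'M[R]_(m1, n2)) (b : 'M[R]_(m2, n2)) :
  row_mx (0 : 'M[R]_(m1 + m2, n1)) (col_mx a b) = col_mx (row_mx 0 a) (row_mx 0 b).
Proof. by rewrite -col_mx0 -block_mxEh block_mxEv. Qed.

Lemma hyper_rank n p (U0 V : 'M['F_2]_n) (M : 'M['F_2]_(n, p)) :
  (U0 <= V)%MS -> \rank V = (\rank U0).+1 -> U0 *m M = 0 -> (\rank (V *m M) <= 1)%N.
Proof.
move=> U0V rV hM; have h2 := mxrank_mul_ker V M.
have h1 : (U0 <= V :&: kermx M)%MS by rewrite sub_capmx U0V sub_kermx hM eqxx.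
have h1' := mxrankS h1.
have h3 : (\rank (V *m M) + \rank U0 <= (\rank U0).+1)%N.
  by rewrite -rV -h2 leq_add2l.
have h4 : (\rank (V *m M) <= 1)%N by lia.
exact: h4.
Qed.

Lemma core (m k : nat) (hkm : (k <= m)%N) (hk : (3 <= k)%N)
  (S : {set 'M['F_2]_(m + 2)}) (hS : is_covering k 3 S)
  (U0 U1 U2 U3 : 'M['F_2]_(m + 2))
  (hU0 : \rank U0 = m) (hU1 : \rank U1 = (m + 1)%N) (hU2 : \rank U2 = (m + 1)%N)
  (hU3 : \rank U3 = (m + 1)%N)
  (h12 : (U1 :&: U2 == U0)%MS) (h13 : (U1 :&: U3 == U0)%MS) (h23 : (U2 :&: U3 == U0)%MS) :
  (covering_number (m + k) k 3 <= 2 ^ (3 * m)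
     + gauss2 k * #|[set X in S | ~~ (X <= U1)%MS && ~~ (X <= U2)%MS && ~~ (X <= U3)%MS]|
     + (2 ^ k - 1) * #|[set X in S | (X <= U1)%MS && ~~ (X <= U0)%MS]|
     + covering_number m k 3)%N.
Proof.
have hr3 : (3 <= k <= m)%N by rewrite hk hkm.
have [SE [hSE cSE]] := cov_exists hr3.
have [Hm [cHm hHm]] := mrd m.
have [sig [sig_rk sig_inj]] := plane_map hk.
have U01 : (U0 <= U1)%MS by rewrite -(eqmxP h12) capmxSl.
have U02 : (U0 <= U2)%MS by rewrite -(eqmxP h12) capmxSr.
have U03 : (U0 <= U3)%MS by rewrite -(eqmxP h13) capmxSr.
have [B0 [eB0 fB0]] := basis_of hU0.
have [u1 hu1] : exists u1 : 'rV['F_2]_(m + 2), (u1 <= U1)%MS && ~~ (u1 <= U0)%MS.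
  case: (pickP (fun i => ~~ (row i U1 <= U0)%MS)) => [i hi | h0].
    by exists (row i U1); rewrite row_sub hi.
  exfalso; have : (U1 <= U0)%MS by apply/row_subP => i; have := h0 i; move/negbFE.
  by move/mxrankS; rewrite hU1 hU0 addn1 ltnn.
case/andP: hu1 => u1U1 u1U0.
have [u2 u2U1] : exists u2 : 'rV['F_2]_(m + 2), ~~ (u2 <= U1)%MS.
  by apply: exists_notin; rewrite hU1 ltn_add2l.
pose T : 'M['F_2]_(m + 2) := col_mx B0 (col_mx u1 u2).
have C1 : (col_mx B0 u1 :=: U1)%MS.
  have sub : (col_mx B0 u1 <= U1)%MS by rewrite col_mx_sub u1U1 eB0 U01.
  apply/eqmxP; rewrite -(geq_leqif (mxrank_leqif_eq sub)).
  by rewrite rank_col1 ?eB0 // hU1 hU0 addn1.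
have Tunit : T \in unitmx.
  rewrite -row_free_unit /row_free; apply/eqP/anti_leq/andP; split; first exact: rank_leq_row.
  have s1 : (col_mx (col_mx B0 u1) u2 <= T)%MS.
    rewrite !col_mx_sub sub_colL /= /T.
    have hu : (col_mx u1 u2 <= T)%MS by exact: sub_colR.
    by rewrite (submx_trans (sub_colL u1 u2) hu) (submx_trans (sub_colR u1 u2) hu).
  apply: (leq_trans _ (mxrankS s1)).
  have r1 : \rank (col_mx B0 u1) = (m + 1)%N by rewrite rank_col1 ?eB0 // hU0 addn1.
  have u2C : ~~ (u2 <= col_mx B0 u1)%MS by rewrite C1.
  by rewrite (rank_col1 u2C) r1 addn1 addn2.
pose Ein : 'M['F_2]_(m, m + k) := row_mx 1%:M 0.
pose Psi (Q : 'M['F_2]_(2, k)) : 'M['F_2]_(m + 2, m + k) := col_mx Ein (row_mx 0 Q).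
pose phi Q := invmx T *m Psi Q.
have TPhi : forall Q, T *m phi Q = Psi Q by move=> Q; rewrite mulKVmx.
have phi_free : forall Q, \rank Q = 2%N -> row_free (phi Q).
  move=> Q rQ; have /row_freeP [Q' hQ'] : row_free Q by rewrite /row_free rQ.
  apply/row_freeP; exists (block_mx 1%:M 0 0 Q' *m T).
  rewrite /phi -mulmxA (mulmxA (Psi Q)) /Psi /Ein -block_mxEv mulmx_block.
  rewrite !mulmx0 !mul0mx !mulmx1 !addr0 add0r hQ' -scalar_mx_block mul1mx.
  by rewrite mulVmx.
have B0phi : forall Q, B0 *m phi Q = Ein.
  by move=> Q; move: (TPhi Q); rewrite /T /Psi !mul_col_mx => /eq_col_mx [].
have u1phi : forall a b : 'rV['F_2]_k, u1 *m phi (col_mx a b) = row_mx 0 a.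
  move=> a b; move: (TPhi (col_mx a b)).
  have e : row_mx (0 : 'M['F_2]_(2, m)) (col_mx a b) = col_mx (row_mx 0 a) (row_mx 0 b) :> 'M_(2, m + k).
    exact: (@row0_col _ 1 1 m k a b).
  rewrite /T /Psi !mul_col_mx e.
  by case/eq_col_mx => _; rewrite (mul_col_mx u1 u2) => /(@eq_col_mx _ 1 1) [].
have U0phi : forall Q r (V : 'M['F_2]_(r, m + 2)), (V <= U0)%MS -> V *m rsubmx (phi Q) = 0.
  move=> Q r V; rewrite -eB0 => /submxP [D ->].
  by rewrite -mulmxA mulmx_rsub B0phi row_mxKr mulmx0.
have hyp : forall Q (V : 'M['F_2]_(m + 2)), (U0 <= V)%MS -> \rank V = (m + 1)%N ->
    (\rank (V *m rsubmx (phi Q)) <= 1)%N.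
  by move=> Q V U0V rV; apply: hyper_rank U0V _ (U0phi _ _ _ (submx_refl _)); rewrite rV hU0 addn1.
case/andP: hS => /forallP hSr /forallP hScov.
have Srk : forall X, X \in S -> \rank X = k.
  by move=> X XS; have := hSr X; rewrite XS /= => /andP [_ /eqP].
have Ein_free : row_free Ein.
  apply/row_freeP; exists (col_mx 1%:M 0).
  by rewrite /Ein mul_row_col mulmx1 mul0mx addr0.
pose J : 'M['F_2]_(k, m) := pid_mx k.
have J_free : row_free J by rewrite /row_free /J rank_pid_mx.
pose NZ := [set v : 'rV['F_2]_k | v != 0].
pose OUT := [set X in S | ~~ (X <= U1)%MS && ~~ (X <= U2)%MS && ~~ (X <= U3)%MS].
pose IN1 := [set X in S | (X <= U1)%MS && ~~ (X <= U0)%MS].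
pose QQ := [set Qof sig P | P in planes k].
pose EF := [set <<X *m Ein>>%MS | X in SE].
pose MF := [set <<row_mx (J *m A) (1%:M : 'M['F_2]_k)>>%MS | A in Hm].
pose PF := [set <<X *m phi Q>>%MS | Q in QQ, X in OUT].
pose pF := [set <<X *m phi (col_mx v (sig v))>>%MS | v in NZ, X in IN1].
pose Blk := EF :|: MF :|: PF :|: pF.
have rk_phi : forall Q (X : 'M['F_2]_(m + 2)), \rank Q = 2%N -> X \in S ->
    \rank <<X *m phi Q>>%MS = k.
  by move=> Q X rQ XS; rewrite mxrank_gen mxrankMfree ?phi_free // Srk.
have QQ2 : forall Q, Q \in QQ -> \rank Q = 2%N.
  by move=> Q /imsetP [P Pin ->]; case: (Qof_plane sig_rk Pin).
have covBlk : is_covering k 3 Blk.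
  apply/andP; split.
    apply/forallP => Z0; apply/implyP; rewrite /Blk !in_setU => /orP [/orP [/orP [] | ] | ].
    - case/imsetP => X' X'in ->; rewrite /subspace genmx_id eqxx mxrank_gen mxrankMfree //.
      by case/andP: hSE => /forallP /(_ X'); rewrite X'in /= => /andP [_ ->].
    - case/imsetP => A _ ->; rewrite /subspace genmx_id eqxx mxrank_gen /=.
      have : row_free (row_mx (J *m A) (1%:M : 'M['F_2]_k)).
        apply/row_freeP; exists (col_mx 0 1%:M).
        by rewrite mul_row_col mulmx0 add0r mulmx1.
      by rewrite /row_free.
    - case/imset2P => Q X hQ; rewrite inE => /andP [XS _] ->.
      rewrite /subspace genmx_id eqxx /=; apply/eqP; apply: rk_phi => //; exact: QQ2.
    - case/imset2P => v X; rewrite inE => hv; rewrite inE => /andP [XS _] ->.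
      rewrite /subspace genmx_id eqxx /=; apply/eqP; apply: rk_phi => //; exact: sig_rk.
  apply/forallP => Y; apply/implyP => /andP [sY /eqP rY]; apply/existsP.
  pose L := lsubmx Y; pose R := rsubmx Y.
  have eYLR : Y = row_mx L R by rewrite hsubmxK.
  have R3 : (\rank R <= 3)%N.
    have eR1 : R = Y *m rsubmx (1%:M : 'M['F_2]_(m + k)) by rewrite mulmx_rsub mulmx1.
    by rewrite -rY eR1 mxrankM_maxl.
  have getX : forall (Z : 'M['F_2]_(m + k, m + 2)), \rank Z = 3%N ->
      exists2 X, X \in S & (Z <= X)%MS.
    move=> Z rZ; have := hScov <<Z>>%MS.
    rewrite /subspace genmx_id eqxx mxrank_gen rZ /= => /existsP [X /andP [XS hX]].
    by exists X => //; rewrite genmxE in hX.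
  move: R3; case eR: (\rank R) => [|[|[|[|d]]]] // _.
  -
    have R0 : R = 0 by apply/eqP; rewrite -mxrank_eq0 eR.
    have eY : Y = L *m Ein by rewrite eYLR R0 /Ein mul_mx_row mulmx1 mulmx0.
    have rL : \rank L = 3%N by rewrite -rY eY mxrankMfree.
    case/andP: hSE => _ /forallP /(_ <<L>>%MS).
    rewrite /subspace genmx_id eqxx mxrank_gen rL /= => /existsP [X /andP [XS hX]].
    rewrite genmxE in hX.
    exists <<X *m Ein>>%MS; rewrite /Blk !in_setU imset_f //=.
    by rewrite genmxE eY submxMr.
  -
    case: (pickP (fun i => row i R != 0)) => [i hi | h0]; last first.
      have R0 : R = 0.
        by apply/row_matrixP => i; rewrite row0; apply/eqP; have := h0 i; move/negbFE.
      by move: eR; rewrite R0 mxrank0.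
    pose v := row i R.
    have Rv : (R <= v)%MS.
      by rewrite -(geq_leqif (mxrank_leqif_sup (row_sub i R))) eR rank_rV hi.
    case/submxP: Rv => D eD.
    pose Q : 'M['F_2]_(2, k) := col_mx v (sig v).
    have rQ : \rank Q = 2%N := sig_rk v hi.
    pose Z := row_mx L D *m col_mx B0 u1.
    have eY : Y = Z *m phi Q.
      rewrite /Z -mulmxA (mul_col_mx B0 u1) B0phi (u1phi v (sig v)) mul_row_col /Ein.
      by rewrite !mul_mx_row mulmx1 !mulmx0 add_row_mx addr0 add0r -eD eYLR.
    have rZ : \rank Z = 3%N by rewrite -rY eY (mxrankMfree Z (phi_free Q rQ)).
    have ZU1 : (Z <= U1)%MS.
      by rewrite /Z; apply: submx_trans (submxMl _ _) _; rewrite C1 submx_refl.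
    have eRZ : R = Z *m rsubmx (phi Q) by rewrite /R eY mulmx_rsub.
    have ZU0 : ~~ (Z <= U0)%MS.
      by apply/negP => /(U0phi Q) h; move: eR; rewrite eRZ h mxrank0.
    have [X XS ZX] := getX Z rZ.
    have XU0 : ~~ (X <= U0)%MS by apply: contra ZU0 => /(submx_trans ZX).
    exists <<X *m phi Q>>%MS.
    have YX : (Y <= <<X *m phi Q>>)%MS by rewrite genmxE eY submxMr.
    rewrite YX andbT /Blk !in_setU.
    case: (boolP (X <= U1)%MS) => XU1.
      have XI : X \in IN1 by rewrite inE XS XU1.
      have vN : v \in NZ by rewrite inE.
      by rewrite (imset2_f (fun v X => <<X *m phi (col_mx v (sig v))>>%MS) vN XI) orbT.
    have XU2 : ~~ (X <= U2)%MS.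
      apply/negP => XU2; move: ZU0.
      by rewrite -(eqmxP h12) sub_capmx ZU1 (submx_trans ZX XU2).
    have XU3 : ~~ (X <= U3)%MS.
      apply/negP => XU3; move: ZU0.
      by rewrite -(eqmxP h13) sub_capmx ZU1 (submx_trans ZX XU3).
    have XO : X \in OUT by rewrite inE XS XU1 XU2 XU3.
    have Pin : <<col_mx v (sig v)>>%MS \in planes k.
      by rewrite inE /subspace genmx_id eqxx mxrank_gen sig_rk.
    have QQQ : Q \in QQ by have := imset_f (Qof sig) Pin; rewrite Qof_col.
    by rewrite (imset2_f (fun Q X => <<X *m phi Q>>%MS) QQQ XO) orbT.
  -
    pose P := <<R>>%MS.
    have Pin : P \in planes k by rewrite inE /subspace /P genmx_id eqxx mxrank_gen eR.
    pose Q := Qof sig P.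
    have [rQ PQ] := Qof_plane sig_rk Pin.
    have RQ : (R <= Q)%MS by apply: submx_trans PQ; rewrite /P genmxE.
    case/submxP: RQ => D eD.
    pose Z := row_mx L D *m T.
    have eY : Y = Z *m phi Q.
      rewrite /Z -mulmxA TPhi /Psi mul_row_col /Ein mul_mx_row mulmx1 mulmx0.
      by rewrite mul_mx_row mulmx0 add_row_mx addr0 add0r -eD eYLR.
    have rZ : \rank Z = 3%N by rewrite -rY eY (mxrankMfree Z (phi_free Q rQ)).
    have [X XS ZX] := getX Z rZ.
    have eRZ : R = Z *m rsubmx (phi Q) by rewrite /R eY mulmx_rsub.
    have notU : forall V : 'M['F_2]_(m + 2), (U0 <= V)%MS -> \rank V = (m + 1)%N -> ~~ (X <= V)%MS.
      move=> V U0V rV; apply/negP => XV.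
      have : (R <= V *m rsubmx (phi Q))%MS by rewrite eRZ submxMr // (submx_trans ZX XV).
      move=> /mxrankS; rewrite eR => h; have := leq_trans h (hyp Q V U0V rV); by [].
    exists <<X *m phi Q>>%MS.
    have XO : X \in OUT by rewrite inE XS /= (notU U1 U01 hU1) (notU U2 U02 hU2) (notU U3 U03 hU3).
    have QQQ : Q \in QQ by apply: imset_f.
    rewrite /Blk !in_setU (imset2_f (fun Q X => <<X *m phi Q>>%MS) QQQ XO) orbT /=.
    by rewrite genmxE eY submxMr.
  -
    have [W [eWY fW]] := basis_of rY.
    pose RW := rsubmx W.
    have YW : (Y <= W)%MS by rewrite eWY.
    have rRW : \rank RW = 3%N.
      apply/eqP; rewrite eqn_leq rank_leq_row /=.
      case/submxP: YW => D eD.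
      have eR' : R = D *m RW by rewrite /R eD -mulmx_rsub.
      apply: (@leq_trans (\rank R)); first by rewrite eR.
      by rewrite eR'; exact: mxrankM_maxr.
    have fX : row_free (RW *m J) by rewrite /row_free mxrankMfree // rRW.
    have [A Ain hA] := hHm _ (lsubmx W) fX.
    exists <<row_mx (J *m A) (1%:M : 'M['F_2]_k)>>%MS.
    rewrite /Blk !in_setU (imset_f _ Ain) orbT /=.
    rewrite genmxE; apply: submx_trans YW _.
    apply/submxP; exists RW.
    by rewrite mul_mx_row mulmx1 mulmxA hA /RW hsubmxK.
have h0 := cov_le covBlk.
have cEF : (#|EF| <= covering_number m k 3)%N by rewrite -cSE; exact: leq_imset_card.
have cMF : (#|MF| <= 2 ^ (3 * m))%N by apply: leq_trans (leq_imset_card _ _) cHm.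
have cPF : (#|PF| <= gauss2 k * #|OUT|)%N.
  rewrite /PF curry_imset2X; apply: leq_trans (leq_imset_card _ _) _.
  rewrite cardsX leq_mul2r; apply/orP; right.
  by apply: leq_trans (leq_imset_card _ _) (card_planes k).
have cpF : (#|pF| <= (2 ^ k - 1) * #|IN1|)%N.
  rewrite /pF curry_imset2X; apply: leq_trans (leq_imset_card _ _) _.
  rewrite cardsX leq_mul2r; apply/orP; right.
  have := cardC1 (0 : 'rV['F_2]_k); rewrite card_mx card_Fp // mul1n subn1 => <-.
  by apply: subset_leq_card; apply/subsetP => v; rewrite !inE.
have cB : (#|Blk| <= #|EF| + #|MF| + #|PF| + #|pF|)%N.
  rewrite /Blk; apply: leq_trans (leq_card_setU _ _) _; rewrite leq_add2r.
  apply: leq_trans (leq_card_setU _ _) _; rewrite leq_add2r.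
  exact: (leq_card_setU _ _).
apply: leq_trans h0 _; apply: leq_trans cB _.
have := leq_add (leq_add (leq_add cEF cMF) cPF) cpF.
move=> h; apply: leq_trans h _; apply: eq_leq; rewrite -/OUT -/IN1; ring.
Qed.

Lemma int_id1 (s a b d e o : nat) : (o + a + b + d = s + 2 * e)%N ->
  (s%:Z - a%:Z - b%:Z - d%:Z + 2 * e%:Z = o%:Z)%R.
Proof. move=> h; lia. Qed.

Lemma int_id2 (a e o : nat) : (o + e = a)%N -> (a%:Z - e%:Z = o%:Z)%R.
Proof. move=> h; lia. Qed.

Lemma count_sets n (S : {set 'M['F_2]_n}) (U0 U1 U2 U3 : 'M['F_2]_n) :
  (U1 :&: U2 == U0)%MS -> (U1 :&: U3 == U0)%MS -> (U2 :&: U3 == U0)%MS ->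
  (#|[set X in S | ~~ (X <= U1)%MS && ~~ (X <= U2)%MS && ~~ (X <= U3)%MS]|
    + #|[set X in S | (X <= U1)%MS]| + #|[set X in S | (X <= U2)%MS]|
    + #|[set X in S | (X <= U3)%MS]| = #|S| + 2 * #|[set X in S | (X <= U0)%MS]|)%N /\
  (#|[set X in S | (X <= U1)%MS && ~~ (X <= U0)%MS]| + #|[set X in S | (X <= U0)%MS]|
    = #|[set X in S | (X <= U1)%MS]|)%N.
Proof.
move=> h12 h13 h23.
have U01 : (U0 <= U1)%MS by rewrite -(eqmxP h12) capmxSl.
have e12 : forall m (X : 'M['F_2]_(m, n)), ((X <= U1)%MS && (X <= U2)%MS) = (X <= U0)%MS.
  by move=> m X; rewrite -sub_capmx (eqmxP h12).
have e13 : forall m (X : 'M['F_2]_(m, n)), ((X <= U1)%MS && (X <= U3)%MS) = (X <= U0)%MS.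
  by move=> m X; rewrite -sub_capmx (eqmxP h13).
have e23 : forall m (X : 'M['F_2]_(m, n)), ((X <= U2)%MS && (X <= U3)%MS) = (X <= U0)%MS.
  by move=> m X; rewrite -sub_capmx (eqmxP h23).
pose A (U : 'M['F_2]_n) := [set X in S | (X <= U)%MS].
have i12 : A U1 :&: A U2 = A U0.
  by apply/setP => X; rewrite !inE andbACA andbb e12.
have i3 : (A U1 :|: A U2) :&: A U3 = A U0.
  apply/setP => X; rewrite !inE; case: (X \in S) => //=.
  by rewrite andb_orl e13 e23 orbb.
have c12 := cardsUI (A U1) (A U2); rewrite i12 in c12.
have c3 := cardsUI (A U1 :|: A U2) (A U3); rewrite i3 in c3.
have cS := cardsID (A U1 :|: A U2 :|: A U3) S.
have eI : S :&: (A U1 :|: A U2 :|: A U3) = A U1 :|: A U2 :|: A U3.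
  by apply/setIidPr/subsetP => X; rewrite !inE -!andb_orr => /andP [].
have eO : S :\: (A U1 :|: A U2 :|: A U3) =
    [set X in S | ~~ (X <= U1)%MS && ~~ (X <= U2)%MS && ~~ (X <= U3)%MS].
  apply/setP => X; rewrite !inE.
  by case: (X \in S); rewrite /= ?andbT ?andbF ?negb_or.
rewrite eI eO in cS.
split.
  rewrite -/(A U1) -/(A U2) -/(A U3) -/(A U0).
  move: c12 c3 cS; clear; lia.
have cI := cardsID (A U0) (A U1).
have eI1 : A U1 :&: A U0 = A U0.
  apply/setIidPr/subsetP => X; rewrite !inE => /andP [-> h] /=.
  exact: submx_trans h U01.
have eD1 : A U1 :\: A U0 = [set X in S | (X <= U1)%MS && ~~ (X <= U0)%MS].
  apply/setP => X; rewrite !inE.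
  by case: (X \in S); rewrite /= ?andbT ?andbF // andbC.
rewrite eI1 eD1 in cI.
rewrite -/(A U1) -/(A U0); move: cI; clear; lia.
Qed.

Unset Implicit Arguments.

Theorem mainTheorem14 (n k : nat) (hn : (2 * k <= n)%N) (hk : (6 <= 2 * k)%N)
  (S : {set 'M['F_2]_(n - k + 2)}) (hS : is_covering k 3 S)
  (U0 U1 U2 U3 : 'M['F_2]_(n - k + 2))
  (hU0 : \rank U0 = (n - k)%N)
  (hU1 : \rank U1 = (n - k + 1)%N) (hU2 : \rank U2 = (n - k + 1)%N)
  (hU3 : \rank U3 = (n - k + 1)%N)
  (h12 : (U1 :&: U2 == U0)%MS) (h13 : (U1 :&: U3 == U0)%MS)
  (h23 : (U2 :&: U3 == U0)%MS) :
  let c := fun U : 'M['F_2]_(n - k + 2) => #|[set X in S | (X <= U)%MS]| in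
  (c U1 <= c U2)%N -> (c U2 <= c U3)%N ->
  (covering_number n k 3)%:Z <=
    (2 ^ (3 * (n - k)))%:Z
    + (gauss2 k)%:Z * (#|S|%:Z - (c U1)%:Z - (c U2)%:Z - (c U3)%:Z + 2 * (c U0)%:Z)
    + (2 ^ k - 1)%:Z * ((c U1)%:Z - (c U0)%:Z)
    + (covering_number (n - k) k 3)%:Z.
Proof.
move=> c _ _.
have hkm : (k <= n - k)%N by move: hn; clear; lia.
have hk3 : (3 <= k)%N by move: hk; clear; lia.
have hkn : (n - k + k = n)%N by move: hn; clear; lia.
have := core hkm hk3 hS hU0 hU1 hU2 hU3 h12 h13 h23.
rewrite hkn.
have [eO eI] := count_sets S h12 h13 h23.
rewrite /c (int_id1 eO) (int_id2 eI).
by rewrite -!PoszM -!PoszD lez_nat.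
Qed.
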